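(* Let $f:[a,b]\to\mathbb{C}$ be continuous and write $f=g+ih$ with $g,h:[a,b]\to\mathbb{R}$ its real and imaginary parts. If $h$ is Lipschitz, then $$\dim_P(G(f))=\dim_P(G(g)),\quad \overline{\dim}_B(G(f))=\overline{\dim}_B(G(g)),\quad \underline{\dim}_B(G(f))=\underline{\dim}_B(G(g)).$$
   Context: For a function $u$ on $[a,b]$, $G(u)=\{(x,u(x)):x\in[a,b]\}$ denotes its graph; for complex-valued $u$ the graph is regarded as a subset of $\mathbb{R}\times\mathbb{C}\cong\mathbb{R}^3$ with the Euclidean metric, for real-valued $u$ as a subset of $\mathbb{R}^2$. $\dim_P$ is packing dimension, $\overline{\dim}_B$ and $\underline{\dim}_B$ are upper and lower box dimension. *)

(* Defs.v *)
From HB Require Import structures.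
From mathcomp Require Import all_boot all_order all_algebra.
From mathcomp Require Import all_classical all_reals all_analysis.
Set Implicit Arguments. Unset Strict Implicit. Unset Printing Implicit Defensive.
Import Order.TTheory GRing.Theory Num.Theory.
Import numFieldNormedType.Exports.
Local Open Scope classical_set_scope.
Local Open Scope ring_scope.

Section Dimensions.
Context {R : realType} {T : Type} (d : T -> T -> R).

Definition diam (A : set T) : \bar R :=
  ereal_sup [set (d x y)%:E | x in A & y in A].

(* N_delta(F): smallest number of sets of diameter at most delta covering F
   (+oo if there is no finite cover) *)
Definition covnum (F : set T) (delta : R) : \bar R :=
  ereal_inf [set (n%:R)%:E | n in [set n : nat | exists U : nat -> set T,
     (forall i, (i < n)%N -> (diam (U i) <= delta%:E)%E) /\
     F `<=` \bigcup_(i in [set i : nat | (i < n)%N]) U i]].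

Definition box_ratio (F : set T) (delta : R) : \bar R :=
  match covnum F delta with
  | (x%:E)%E => (ln x / (- ln delta))%:E
  | _ => +oo%E
  end.

(* upper box dimension: limsup_{delta -> 0+} log N_delta(F) / (-log delta) *)
Definition upper_box_dim (F : set T) : \bar R :=
  ereal_inf [set ereal_sup [set box_ratio F delta | delta in `]0, e[]
            | e in `]0, 1]].

(* lower box dimension: liminf_{delta -> 0+} log N_delta(F) / (-log delta) *)
Definition lower_box_dim (F : set T) : \bar R :=
  ereal_sup [set ereal_inf [set box_ratio F delta | delta in `]0, e[]
            | e in `]0, 1]].

Definition cball (x : T) (r : R) : set T := [set y | d x y <= r].

(* P^s_delta(F) = sup { sum_i |B_i|^s : {B_i} countable collection of disjoint
   (closed) balls of radii at most delta with centres in F };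
   the diameter of a Euclidean ball of radius r is 2r. *)
Definition packing_delta (s : R) (F : set T) (delta : R) : \bar R :=
  ereal_sup [set v | exists (J : set nat) (r : nat -> R) (x : nat -> T),
     (forall i, J i -> F (x i) /\ 0 < r i <= delta) /\
     (forall i j, J i -> J j -> i <> j ->
         cball (x i) (r i) `&` cball (x j) (r j) = set0) /\
     v = (\esum_(i in J) ((2 * r i) `^ s)%:E)%E].

(* packing premeasure P^s_0(F) = lim_{delta -> 0} P^s_delta(F)
   (a decreasing limit, hence an infimum) *)
Definition packing_premeasure (s : R) (F : set T) : \bar R :=
  ereal_inf [set packing_delta s F delta | delta in `]0, +oo[].

Definition packing_measure (s : R) (F : set T) : \bar R :=
  ereal_inf [set (\sum_(0 <= i <oo) packing_premeasure s (Fi i))%E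
    | Fi in [set Fi : nat -> set T | F `<=` \bigcup_i Fi i]].

Definition packing_dim (F : set T) : \bar R :=
  ereal_inf [set s%:E | s in [set s : R | 0 <= s /\ packing_measure s F = 0%E]].

End Dimensions.

Definition dist2 {R : realType} (p q : R * R) : R :=
  Num.sqrt ((p.1 - q.1) ^+ 2 + (p.2 - q.2) ^+ 2).

Definition dist3 {R : realType} (p q : R * R * R) : R :=
  Num.sqrt ((p.1.1 - q.1.1) ^+ 2 + (p.1.2 - q.1.2) ^+ 2 + (p.2 - q.2) ^+ 2).

Definition graph2 {R : realType} (a b : R) (u : R -> R) : set (R * R) :=
  [set (x, u x) | x in `[a, b]].

(* graph of f = g + i h : [a,b] -> C, as a subset of R x C = R^3,
   a point (x, f x) being identified with (x, Re f x, Im f x) *)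
Definition graphC {R : realType} (a b : R) (g h : R -> R) : set (R * R * R) :=
  [set (x, g x, h x) | x in `[a, b]].

(* Main.v *)
Require Import Defs.
From HB Require Import structures.
From mathcomp Require Import all_boot all_order all_algebra.
From mathcomp Require Import all_classical all_reals all_analysis.
From mathcomp Require Import ring lra.
Import Order.TTheory GRing.Theory Num.Theory.
Import numFieldNormedType.Exports.
Local Open Scope classical_set_scope.
Local Open Scope ring_scope.
Lemma sqrt_leP {R : realType} (X r : R) : 0 <= r -> X <= r ^+ 2 -> Num.sqrt X <= r.
Proof.
move=> r0 h; rewrite -(ger0_norm r0) -sqrtr_sqr ler_sqrt //; exact: sqr_ge0.
Qed.

Lemma le_sqrtP {R : realType} (X r : R) : 0 <= r -> r ^+ 2 <= X -> r <= Num.sqrt X.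
Proof.
move=> r0 h; rewrite -(ger0_norm r0) -sqrtr_sqr ler_sqrt //.
exact: le_trans (sqr_ge0 r) h.
Qed.

Lemma dist2_ge0 {R : realType} (p q : R * R) : 0 <= dist2 p q.
Proof. exact: sqrtr_ge0. Qed.

Lemma dist3_ge0 {R : realType} (p q : R * R * R) : 0 <= dist3 p q.
Proof. exact: sqrtr_ge0. Qed.

Lemma dist3E {R : realType} (p q : R * R * R) :
  dist3 p q = Num.sqrt (dist2 p.1 q.1 ^+ 2 + (p.2 - q.2) ^+ 2).
Proof.
by rewrite /dist3 /dist2 sqr_sqrtr // addr_ge0 // sqr_ge0.
Qed.

Lemma dist2_le3 {R : realType} (p q : R * R * R) : dist2 p.1 q.1 <= dist3 p q.
Proof.
rewrite dist3E; apply: le_sqrtP; first exact: dist2_ge0.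
by rewrite lerDl sqr_ge0.
Qed.

Lemma dist2_x {R : realType} (p q : R * R) : `|p.1 - q.1| <= dist2 p q.
Proof.
rewrite -sqrtr_sqr /dist2 ler_sqrt ?lerDl ?sqr_ge0 //.
by rewrite addr_ge0 // sqr_ge0.
Qed.

Lemma sqr_le_of_abs {R : realType} (u v : R) : `|u| <= v -> u ^+ 2 <= v ^+ 2.
Proof.
move=> h; have n0 := normr_ge0 u.
rewrite -real_normK ?num_real //; nra.
Qed.

Lemma dist3_graph {R : realType} (g h : R -> R) (L x y : R) : 0 <= L ->
  `|h x - h y| <= L * `|x - y| ->
  dist3 (x, g x, h x) (y, g y, h y) <=
    Num.sqrt (1 + L ^+ 2) * dist2 (x, g x) (y, g y).
Proof.
move=> L0 hl; set K := Num.sqrt _; set D := dist2 _ _.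
have D0 : 0 <= D by exact: dist2_ge0.
have hx : `|x - y| <= D by have := dist2_x (x, g x) (y, g y).
have K2 : K ^+ 2 = 1 + L ^+ 2 by rewrite sqr_sqrtr // addr_ge0 // sqr_ge0.
rewrite dist3E /=; apply: sqrt_leP; first by rewrite mulr_ge0 // sqrtr_ge0.
have : `|h x - h y| <= L * D by apply: (le_trans hl); rewrite ler_wpM2l.
move/sqr_le_of_abs => e2.
rewrite exprMn K2 -/D; nra.
Qed.

Lemma ball3_of_2 {R : realType} (g h : R -> R) (L xi xj ri rj : R) (z : R * R) :
  0 <= L -> `|h xi - h xj| <= L * `|xi - xj| -> 0 < ri -> 0 < rj ->
  Num.sqrt (1 + L ^+ 2) * dist2 (xi, g xi) z <= ri ->
  Num.sqrt (1 + L ^+ 2) * dist2 (xj, g xj) z <= rj ->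
  dist3 (xi, g xi, h xi) (z, (rj * h xi + ri * h xj) / (ri + rj)) <= ri.
Proof.
move=> L0 hl ri0 rj0; set K := Num.sqrt _.
set di := dist2 _ z; set dj := dist2 _ z => hi hj.
have K2 : K ^+ 2 = 1 + L ^+ 2 by rewrite sqr_sqrtr // addr_ge0 // sqr_ge0.
have K0 : 0 < K by rewrite sqrtr_gt0; apply: (lt_le_trans ltr01); rewrite lerDl sqr_ge0.
have di0 : 0 <= di by exact: dist2_ge0.
have dj0 : 0 <= dj by exact: dist2_ge0.
have hxi : `|xi - z.1| <= di by have := dist2_x (xi, g xi) z.
have hxj : `|xj - z.1| <= dj by have := dist2_x (xj, g xj) z.
have hxij : `|xi - xj| <= di + dj.
  apply: le_trans (ler_distD z.1 _ _) _; apply: lerD => //; by rewrite distrC.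
set E := (h xi - h xj) / (ri + rj).
have rr0 : 0 < ri + rj by rewrite addr_gt0.
have hE : `|K * E| <= L.
  rewrite normrM normf_div (gtr0_norm K0) (gtr0_norm rr0) mulrA ler_pdivrMr //.
  apply: (le_trans (y := K * (L * (di + dj)))).
    rewrite ler_pM2l //; apply: (le_trans hl); exact: ler_wpM2l.
  rewrite mulrCA; apply: ler_wpM2l => //; rewrite mulrDr; exact: lerD.
have eq1 : h xi - (rj * h xi + ri * h xj) / (ri + rj) = ri * E.
  rewrite /E; field; exact: lt0r_neq0.
clearbody E K.
rewrite dist3E /= eq1 -/di; apply: sqrt_leP; first exact: ltW.
have A1 : (K * di) ^+ 2 <= ri ^+ 2 by apply: sqr_le_of_abs; rewrite ger0_norm // mulr_ge0 // ltW.
have A2 : (K * E) ^+ 2 <= L ^+ 2 by exact: sqr_le_of_abs.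
rewrite !exprMn in A1 A2 *; rewrite K2 in A1 A2.
have A3 : ri ^+ 2 * ((1 + L ^+ 2) * E ^+ 2) <= ri ^+ 2 * L ^+ 2 by apply: ler_wpM2l; [exact: sqr_ge0 | exact: A2].
have Kp : 0 < 1 + L ^+ 2 by rewrite -K2 exprn_gt0.
rewrite -(ler_pM2l Kp).
have -> : (1 + L ^+ 2) * (di ^+ 2 + ri ^+ 2 * E ^+ 2) =
  (1 + L ^+ 2) * di ^+ 2 + ri ^+ 2 * ((1 + L ^+ 2) * E ^+ 2) by ring.
have -> : (1 + L ^+ 2) * ri ^+ 2 = ri ^+ 2 + ri ^+ 2 * L ^+ 2 by ring.
exact: lerD.
Qed.

Definition pk {R : realType} {T : Type} (d : T -> T -> R) (F : set T) (delta : R)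
  (J : set nat) (r : nat -> R) (x : nat -> T) :=
  (forall i, J i -> F (x i) /\ 0 < r i <= delta) /\
  (forall i j, J i -> J j -> i <> j ->
         cball d (x i) (r i) `&` cball d (x j) (r j) = set0).

Definition psum {R : realType} (s : R) (J : set nat) (r : nat -> R) : \bar R :=
  (\esum_(i in J) ((2 * r i) `^ s)%:E)%E.

Lemma pdelta_le {R : realType} {T1 T2 : Type} (d1 : T1 -> T1 -> R) (d2 : T2 -> T2 -> R)
  (s : R) (A : set T1) (B : set T2) (delta c : R) : 0 <= c ->
  (forall J r x, pk d2 B delta J r x -> exists r' x',
     pk d1 A delta J r' x' /\ (psum s J r <= c%:E * psum s J r')%E) ->
  (packing_delta d2 s B delta <= c%:E * packing_delta d1 s A delta)%E.
Proof.
move=> c0 H; apply: ge_ereal_sup => v [J [r [x [H1 [H2 ->]]]]].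
have [r' [x' [[H1' H2'] Hle]]] := H J r x (conj H1 H2).
apply: (le_trans Hle); apply: lee_wpmul2l; first by rewrite lee_fin.
apply: ereal_sup_ubound; exists J, r', x'; split => //.
Qed.

Lemma prem_le {R : realType} {T1 T2 : Type} (d1 : T1 -> T1 -> R) (d2 : T2 -> T2 -> R)
  (s : R) (A : set T1) (B : set T2) (c : R) : 0 < c ->
  (forall delta J r x, 0 < delta -> pk d2 B delta J r x -> exists r' x',
     pk d1 A delta J r' x' /\ (psum s J r <= c%:E * psum s J r')%E) ->
  (packing_premeasure d2 s B <= c%:E * packing_premeasure d1 s A)%E.
Proof.
move=> c0 H; rewrite /packing_premeasure -ereal_inf_pZl //.
apply: le_ereal_inf_tmp => _ [_ [delta hd <-] <-].
have d0 : 0 < delta by move: hd; rewrite /= in_itv /= andbT.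
apply: le_trans _ (pdelta_le d1 d2 s A B delta c (ltW c0) (fun J r x => H delta J r x d0)).
by apply: ereal_inf_lbound; exists delta.
Qed.

Lemma pdelta_ge0 {R : realType} {T : Type} (d : T -> T -> R) (s : R) (F : set T)
  (t0 : T) (delta : R) : (0 <= packing_delta d s F delta)%E.
Proof.
apply: le_ereal_sup_tmp; exists 0%E => //.
exists set0, (fun _ => 1), (fun _ => t0); split => //; split => //.
by rewrite esum_set0.
Qed.

Lemma prem_ge0 {R : realType} {T : Type} (d : T -> T -> R) (s : R) (F : set T)
  (t0 : T) : (0 <= packing_premeasure d s F)%E.
Proof.
by apply: le_ereal_inf_tmp => _ [delta _ <-]; exact: pdelta_ge0.
Qed.

Lemma meas_ge0 {R : realType} {T : Type} (d : T -> T -> R) (s : R) (F : set T)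
  (t0 : T) : (0 <= packing_measure d s F)%E.
Proof.
apply: le_ereal_inf_tmp => _ [Fi _ <-].
by apply: nneseries_ge0 => i _ _; exact: prem_ge0.
Qed.

Lemma meas_le {R : realType} {T1 T2 : Type} (d1 : T1 -> T1 -> R) (d2 : T2 -> T2 -> R)
  (s : R) (A : set T1) (B : set T2) (c : R) (t1 : T1) (t2 : T2) : 0 < c ->
  (forall Fi : nat -> set T1, A `<=` \bigcup_i Fi i -> exists Gi : nat -> set T2,
     B `<=` \bigcup_i Gi i /\
     forall i, (packing_premeasure d2 s (Gi i) <= c%:E * packing_premeasure d1 s (Fi i))%E) ->
  (packing_measure d2 s B <= c%:E * packing_measure d1 s A)%E.
Proof.
move=> c0 H; rewrite /packing_measure -ereal_inf_pZl //.
apply: le_ereal_inf_tmp => _ [_ [Fi hFi <-] <-].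
have [Gi [hG hle]] := H Fi hFi.
apply: (@le_trans _ _ (\sum_(0 <= i <oo) packing_premeasure d2 s (Gi i))%E).
  by apply: ereal_inf_lbound; exists Gi.
rewrite -nneseriesZl; last by move=> i _; exact: prem_ge0.
apply: lee_nneseries => // i _ _; exact: prem_ge0.
Qed.

Lemma meas_zero {R : realType} {T1 T2 : Type} (d1 : T1 -> T1 -> R) (d2 : T2 -> T2 -> R)
  (s : R) (A : set T1) (B : set T2) (c : R) (t2 : T2) :
  (packing_measure d2 s B <= c%:E * packing_measure d1 s A)%E ->
  packing_measure d1 s A = 0%E -> packing_measure d2 s B = 0%E.
Proof.
move=> h h0; rewrite h0 mule0 in h; apply/eqP; rewrite eq_le h /=.
exact: meas_ge0.
Qed.

Lemma esum_scale_le {R : realType} (J : set nat) (c : R) (f : nat -> \bar R) :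
  0 <= c -> (forall i, 0 <= f i)%E ->
  (\esum_(i in J) (c%:E * f i) <= c%:E * \esum_(i in J) f i)%E.
Proof.
move=> c0 f0; apply: ge_ereal_sup => _ [A hA <-].
rewrite -ge0_mule_fsumr //; apply: lee_wpmul2l; first by rewrite lee_fin.
by apply: ereal_sup_ubound; exists A.
Qed.

Lemma graph2P {R : realType} {a b : R} {g : R -> R} {p} :
  graph2 a b g p -> exists x, x \in `[a, b] /\ p = (x, g x).
Proof. by move=> [x hx <-]; exists x. Qed.

Lemma graphCP {R : realType} {a b : R} {g h : R -> R} {q} :
  graphC a b g h q -> exists x, x \in `[a, b] /\ q = (x, g x, h x).
Proof. by move=> [x hx <-]; exists x. Qed.

Lemma K_ge1 {R : realType} (L : R) : 1 <= Num.sqrt (1 + L ^+ 2).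
Proof. by apply: le_sqrtP => //; rewrite expr1n lerDl sqr_ge0. Qed.

Lemma m2_le_m3 {R : realType} (a b : R) (g h : R -> R) (s : R) :
  (packing_measure dist2 s (graph2 a b g) <=
     1%:E * packing_measure dist3 s (graphC a b g h))%E.
Proof.
apply: (meas_le _ _ _ _ _ _ (0, 0, 0) (0, 0)) => // Fi hFi.
exists (fun i => [set p | graph2 a b g p /\ Fi i (p, h p.1)]); split.
  move=> p hp; have [x [hx ->]] := graph2P hp.
  have [i _ hi] : (\bigcup_i Fi i) (x, g x, h x) by apply: hFi; exists x.
  by exists i => //; split => //; exists x.
move=> i; apply: prem_le => // delta J r x d0 [H1 H2].
exists r, (fun j => (x j, h (x j).1)); split; last by rewrite mul1e.
split.
  by move=> j hj; have [[_ ?] ?] := H1 j hj.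
move=> j k hj hk jk; apply/seteqP; split => // w [wj wk].
have := H2 j k hj hk jk; move/seteqP => [+ _]; apply; split.
  by apply: le_trans (dist2_le3 (x j, h (x j).1) w) wj.
by apply: le_trans (dist2_le3 (x k, h (x k).1) w) wk.
Qed.

Lemma m3_le_m2 {R : realType} (a b : R) (g h : R -> R) (L s : R) : 0 <= L ->
  (forall x y, x \in `[a, b] -> y \in `[a, b] -> `|h x - h y| <= L * `|x - y|) ->
  (packing_measure dist3 s (graphC a b g h) <=
     ((Num.sqrt (1 + L ^+ 2)) `^ s)%:E * packing_measure dist2 s (graph2 a b g))%E.
Proof.
move=> L0 hL; set K := Num.sqrt _.
have K1 : 1 <= K by exact: K_ge1.
have K0 : 0 < K by exact: lt_le_trans ltr01 K1.
apply: (meas_le _ _ _ _ _ _ (0, 0) (0, 0, 0)); first by rewrite powR_gt0.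
move=> Fi hFi.
exists (fun i => [set q | graphC a b g h q /\ Fi i q.1]); split.
  move=> q hq; have [x [hx ->]] := graphCP hq.
  have [i _ hi] : (\bigcup_i Fi i) (x, g x) by apply: hFi; exists x.
  by exists i => //; split => //; exists x.
move=> i; apply: prem_le; first by rewrite powR_gt0.
move=> delta J r x d0 [H1 H2].
exists (fun j => r j / K), (fun j => (x j).1); split.
  split.
    move=> j hj; have [[_ ?] /andP[rj0 rjd]] := H1 j hj; split => //.
    apply/andP; split; first exact: divr_gt0.
    apply: le_trans _ rjd; rewrite ler_pdivrMr // ler_peMr //; exact: ltW.
  move=> j k hj hk jk; apply/seteqP; split => // w [wj wk].
  have [[hxj _] /andP[rj0 _]] := H1 j hj.
  have [[hxk _] /andP[rk0 _]] := H1 k hk.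
  have [xj [xjI exj]] := graphCP hxj.
  have [xk [xkI exk]] := graphCP hxk.
  move: wj wk; rewrite /cball /= !ler_pdivlMr // exj exk /= => wj wk.
  rewrite mulrC in wj; rewrite mulrC in wk.
  have := H2 j k hj hk jk; move/seteqP => [+ _].
  move/(_ (w, (r k * h xj + r j * h xk) / (r j + r k))); apply; split.
    rewrite /cball /= exj; apply: (ball3_of_2 g h L xj xk) => //; exact: hL.
  rewrite /cball /= exk.
  have -> : (r k * h xj + r j * h xk) / (r j + r k) = (r j * h xk + r k * h xj) / (r k + r j).
    by rewrite addrC (addrC (r j)).
  apply: (ball3_of_2 g h L xk xj) => //; exact: hL.
rewrite /psum.
rewrite (eq_esum (b := (fun i => (K `^ s)%:E * ((2 * (r i / K)) `^ s)%:E)%E)); last first.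
  move=> l hl; have [_ /andP[ri0 _]] := H1 l hl.
  rewrite -EFinM -powRM ?ltW //; last by rewrite mulr_gt0 // divr_gt0.
  congr ((_ `^ _)%:E); field; exact: lt0r_neq0.
apply: esum_scale_le; first exact: powR_ge0.
by move=> l; rewrite lee_fin powR_ge0.
Qed.

Lemma pdim_eq {R : realType} (a b : R) (g h : R -> R) (L : R) : 0 <= L ->
  (forall x y, x \in `[a, b] -> y \in `[a, b] -> `|h x - h y| <= L * `|x - y|) ->
  packing_dim dist3 (graphC a b g h) = packing_dim dist2 (graph2 a b g).
Proof.
move=> L0 hL; rewrite /packing_dim; congr ereal_inf; congr image.
apply/funext => s; apply/propext; split => -[s0 hs]; split => //.
  exact: (meas_zero _ _ _ _ _ _ (0, 0) (m2_le_m3 a b g h s) hs).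
exact: (meas_zero _ _ _ _ _ _ (0, 0, 0) (m3_le_m2 a b g h L s L0 hL) hs).
Qed.

Lemma diam_leP {R : realType} {T : Type} (d : T -> T -> R) (U : set T) (e : R) :
  (forall x y, U x -> U y -> d x y <= e) -> (diam d U <= e%:E)%E.
Proof. by move=> H; apply: ge_ereal_sup => _ [x Ux [y Uy <-]]; rewrite lee_fin H. Qed.

Lemma diam_leE {R : realType} {T : Type} (d : T -> T -> R) (U : set T) (e : R) x y :
  (diam d U <= e%:E)%E -> U x -> U y -> d x y <= e.
Proof.
move=> H Ux Uy; rewrite -lee_fin; apply: le_trans H.
by apply: ereal_sup_ubound; exists x => //; exists y.
Qed.

Lemma covnum_le {R : realType} {T1 T2 : Type} (d1 : T1 -> T1 -> R) (d2 : T2 -> T2 -> R)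
  (A : set T1) (B : set T2) (e1 e2 : R) :
  (forall n (U : nat -> set T1), (forall i, (i < n)%N -> (diam d1 (U i) <= e1%:E)%E) ->
     A `<=` \bigcup_(i in [set i : nat | (i < n)%N]) U i ->
     exists V : nat -> set T2, (forall i, (i < n)%N -> (diam d2 (V i) <= e2%:E)%E) /\
     B `<=` \bigcup_(i in [set i : nat | (i < n)%N]) V i) ->
  (covnum d2 B e2 <= covnum d1 A e1)%E.
Proof.
move=> H; apply: le_ereal_inf_tmp => _ [n [U [hU hc]] <-].
by apply: ereal_inf_lbound; exists n => //; exact: (H n U hU hc).
Qed.

Lemma covnum_ge1 {R : realType} {T : Type} (d : T -> T -> R) (F : set T) (e : R) (t : T) :
  F t -> (1 <= covnum d F e)%E.
Proof.
move=> Ft; apply: le_ereal_inf_tmp => _ [n [U [_ hc]] <-].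
rewrite lee_fin ler1n; case: n hc => // hc.
by have [i hi _] := hc t Ft.
Qed.

Lemma N2_le_N3 {R : realType} (a b : R) (g h : R -> R) (e : R) :
  (covnum dist2 (graph2 a b g) e <= covnum dist3 (graphC a b g h) e)%E.
Proof.
apply: covnum_le => n U hU hc.
exists (fun i => [set p | exists q, U i q /\ p = q.1]); split.
  move=> i hi; apply: diam_leP => _ _ [q [Uq ->]] [q' [Uq' ->]].
  apply: le_trans (dist2_le3 q q') _; exact: diam_leE (hU i hi) Uq Uq'.
move=> p hp; have [x [hx ->]] := graph2P hp.
have [i hi Ui] : (\bigcup_(i in [set i : nat | (i < n)%N]) U i) (x, g x, h x).
  by apply: hc; exists x.
by exists i => //; exists (x, g x, h x).
Qed.

Lemma N3_le_N2 {R : realType} (a b : R) (g h : R -> R) (L e : R) : 0 <= L ->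
  (forall x y, x \in `[a, b] -> y \in `[a, b] -> `|h x - h y| <= L * `|x - y|) ->
  (covnum dist3 (graphC a b g h) (Num.sqrt (1 + L ^+ 2) * e)
     <= covnum dist2 (graph2 a b g) e)%E.
Proof.
move=> L0 hL; apply: covnum_le => n U hU hc.
exists (fun i => [set q | graph2 a b g q.1 /\ U i q.1 /\ q.2 = h q.1.1]); split.
  move=> i hi; apply: diam_leP => q q' [hq [Uq eq]] [hq' [Uq' eq']].
  have [x [hx ex]] := graph2P hq; have [y [hy ey]] := graph2P hq'.
  have -> : q = (x, g x, h x) by case: q hq Uq eq ex => [q1 q2] /= _ _ -> ->.
  have -> : q' = (y, g y, h y) by case: q' hq' Uq' eq' ey => [q1 q2] /= _ _ -> ->.
  apply: le_trans (dist3_graph g h L x y L0 (hL x y hx hy)) _.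
  apply: ler_wpM2l; first exact: sqrtr_ge0.
  apply: (diam_leE _ _ _ _ _ (hU i hi)); [rewrite -ex | rewrite -ey] => //.
move=> q hq; have [x [hx ->]] := graphCP hq.
have [i hi Ui] : (\bigcup_(i in [set i : nat | (i < n)%N]) U i) (x, g x).
  by apply: hc; exists x.
by exists i => //=; split => //; exists x.
Qed.

Lemma ln_lt0' {R : realType} (x : R) : 0 < x -> x < 1 -> ln x < 0.
Proof. by move=> x0 x1; rewrite -ln1 ltr_ln // posrE. Qed.

Definition br {R : realType} (N : \bar R) (e : R) : \bar R :=
  match N with
  | (x%:E)%E => (ln x / - ln e)%:E
  | _ => +oo%E
  end.

Lemma box_ratioE {R : realType} {T : Type} (d : T -> T -> R) F e :
  box_ratio d F e = br (covnum d F e) e.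
Proof. by []. Qed.

Lemma br_ge0 {R : realType} (N : \bar R) (e : R) :
  (1 <= N)%E -> 0 < e -> e < 1 -> (0 <= br N e)%E.
Proof.
case: N => [x||] //= x1 e0 e1; rewrite lee_fin divr_ge0 //.
  by apply: ln_ge0; rewrite -lee_fin.
by rewrite oppr_ge0 ltW // ln_lt0'.
Qed.

Lemma br_mono {R : realType} (N N' : \bar R) (e : R) :
  (1 <= N)%E -> (N <= N')%E -> 0 < e -> e < 1 -> (br N e <= br N' e)%E.
Proof.
case: N' => [y| |] /=; last 2 first.
- by move=> *; rewrite leey.
- by case: N.
  case: N => [x||] //= x1 xy e0 e1; rewrite lee_fin in x1 xy *.
  apply: ler_wpM2r; first by rewrite invr_ge0 oppr_ge0 ltW // ln_lt0'.
  rewrite ler_ln // posrE; apply: lt_le_trans ltr01 _ => //.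
  exact: le_trans x1 xy.
Qed.

Lemma br_scale {R : realType} (r K : R) (N3 N2 : \bar R) (e : R) :
  0 < r -> r < 1 -> 1 <= K -> (1 <= N3)%E -> (N3 <= N2)%E -> 0 < e -> e < 1 ->
  ln K <= (1 - r) * (- ln e) ->
  (r%:E * br N3 (K * e) <= br N2 e)%E.
Proof.
move=> r0 r1 K1 N1 N32 e0 e1 hK.
case: N2 N32 => [y||] N32 /=; last 2 first.
- by rewrite leey.
- by case: N3 N1 N32.
case: N3 N1 N32 => [x||] //= x1 xy; rewrite lee_fin in x1 xy.
rewrite lee_fin.
have K0 : 0 < K by exact: lt_le_trans ltr01 K1.
have lK0 : 0 <= ln K by exact: ln_ge0.
rewrite lnM ?posrE //.
set u := - ln e.
have u0 : 0 < u by rewrite /u oppr_gt0 ln_lt0'.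
have lx0 : 0 <= ln x by exact: ln_ge0.
have lxy : ln x <= ln y.
  by rewrite ler_ln // posrE; apply: lt_le_trans ltr01 _ => //; exact: le_trans x1 xy.
have hu : r * u <= u - ln K by move: hK; rewrite mulrBl mul1r -/u; lra.
have uK : 0 < u - ln K by apply: lt_le_trans hu; rewrite mulr_gt0.
have -> : - (ln K + ln e) = u - ln K by rewrite /u; ring.
rewrite mulrA ler_pdivrMr // mulrAC ler_pdivlMr //.
nra.
Qed.

Definition UB {R : realType} (rho : R -> \bar R) : \bar R :=
  ereal_inf [set ereal_sup [set rho delta | delta in `]0, e[] | e in `]0, 1]].
Definition LB {R : realType} (rho : R -> \bar R) : \bar R :=
  ereal_sup [set ereal_inf [set rho delta | delta in `]0, e[] | e in `]0, 1]].

Lemma UB_le {R : realType} (rho rho' : R -> \bar R) :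
  (forall d, 0 < d -> d < 1 -> (rho d <= rho' d)%E) -> (UB rho <= UB rho')%E.
Proof.
move=> H; apply: le_ereal_inf_tmp => _ [e he <-].
move: he; rewrite /= in_itv /= => /andP[e0 e1].
apply: ge_ereal_inf; exists (ereal_sup [set rho delta | delta in `]0, e[]).
  by exists e => //; rewrite /= in_itv /= e0.
apply: ge_ereal_sup => _ [d hd <-].
move: (hd); rewrite /= in_itv /= => /andP[d0 de].
apply: le_trans (H d d0 (lt_le_trans de e1)) _.
by apply: ereal_sup_ubound; exists d.
Qed.

Lemma LB_le {R : realType} (rho rho' : R -> \bar R) :
  (forall d, 0 < d -> d < 1 -> (rho d <= rho' d)%E) -> (LB rho <= LB rho')%E.
Proof.
move=> H; apply: ge_ereal_sup => _ [e he <-].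
move: (he); rewrite /= in_itv /= => /andP[e0 e1].
apply: le_ereal_sup_tmp; exists (ereal_inf [set rho' delta | delta in `]0, e[]).
  by exists e.
apply: le_ereal_inf_tmp => _ [d hd <-].
move: (hd); rewrite /= in_itv /= => /andP[d0 de].
apply: le_trans _ (H d d0 (lt_le_trans de e1)).
by apply: ereal_inf_lbound; exists d.
Qed.

Lemma UB_scale {R : realType} (rho3 rho2 : R -> \bar R) (K : R) : 0 < K ->
  (forall d, 0 < d -> d < 1 -> (0 <= rho3 d)%E) ->
  (forall r, 0 < r -> r < 1 -> exists E, 0 < E /\
     forall d, 0 < d -> d < E -> (r%:E * rho3 (K * d)%R <= rho2 d)%E) ->
  (UB rho3 <= UB rho2)%E.
Proof.
move=> K0 h0 H.
have U0 : (0 <= UB rho3)%E.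
  apply: le_ereal_inf_tmp => _ [e he <-].
  move: he; rewrite /= in_itv /= => /andP[e0 e1].
  apply: le_ereal_sup_tmp; exists (rho3 (e / 2)).
    by exists (e / 2) => //; rewrite /= in_itv /= divr_gt0 //= ltr_pdivrMr // ltr_pMr // ltr1n.
  apply: h0; first by rewrite divr_gt0.
  by apply: lt_le_trans e1; rewrite ltr_pdivrMr // ltr_pMr // ltr1n.
apply/lee_mul01Pr => // r /andP[r0 r1].
apply: le_ereal_inf_tmp => _ [e he <-].
move: he; rewrite /= in_itv /= => /andP[e0 e1].
have [E [E0 HE]] := H r r0 r1.
set e' := Num.min e E.
have e'0 : 0 < e' by rewrite lt_min e0 E0.
set e'' := Num.min 1 (K * e').
have e''0 : 0 < e'' by rewrite lt_min ltr01 mulr_gt0.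
have hU : (UB rho3 <= ereal_sup [set rho3 delta | delta in `]0%R, e''[])%E.
  apply: ereal_inf_lbound; exists e'' => //.
  by rewrite /= in_itv /= e''0 ge_min lexx.
apply: le_trans (lee_wpmul2l _ hU) _; first by rewrite lee_fin ltW.
rewrite -ereal_sup_pZl //; apply: ge_ereal_sup => _ [_ [d' hd' <-] <-].
move: hd'; rewrite /= in_itv /= => /andP[d'0 d'e].
have d'K : d' < K * e' by apply: lt_le_trans d'e _; rewrite ge_min lexx orbT.
have hd : d' / K < e' by rewrite ltr_pdivrMr // mulrC.
have -> : d' = K * (d' / K) by field; exact: lt0r_neq0.
apply: le_trans (HE (d' / K) _ _) _.
- exact: divr_gt0.
- by apply: lt_le_trans hd _; rewrite ge_min lexx orbT.
apply: ereal_sup_ubound; exists (d' / K) => //.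
rewrite /= in_itv /= divr_gt0 //=.
by apply: lt_le_trans hd _; rewrite ge_min lexx.
Qed.

Lemma LB_scale {R : realType} (rho3 rho2 : R -> \bar R) (K : R) : 1 <= K ->
  (forall d, 0 < d -> d < 1 -> (0 <= rho3 d)%E) ->
  (forall r, 0 < r -> r < 1 -> exists E, 0 < E /\
     forall d, 0 < d -> d < E -> (r%:E * rho3 (K * d)%R <= rho2 d)%E) ->
  (LB rho3 <= LB rho2)%E.
Proof.
move=> K1 h0 H.
have K0 : 0 < K by exact: lt_le_trans ltr01 K1.
apply: ge_ereal_sup => _ [e he <-].
move: he; rewrite /= in_itv /= => /andP[e0 e1].
have I0 : (0 <= ereal_inf [set rho3 delta | delta in `]0%R, e[])%E.
  apply: le_ereal_inf_tmp => _ [d hd <-].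
  move: hd; rewrite /= in_itv /= => /andP[d0 de].
  exact: h0 d d0 (lt_le_trans de e1).
apply/lee_mul01Pr => // r /andP[r0 r1].
have [E [E0 HE]] := H r r0 r1.
set e' := Num.min (e / K) E.
have e'0 : 0 < e' by rewrite lt_min E0 divr_gt0.
have e'e : e' <= e.
  rewrite ge_min; apply/orP; left; rewrite ler_pdivrMr // ler_peMr //; exact: ltW.
apply: le_ereal_sup_tmp; exists (ereal_inf [set rho2 delta | delta in `]0, e'[]).
  by exists e' => //; rewrite /= in_itv /= e'0 (le_trans e'e).
apply: le_ereal_inf_tmp => _ [d hd <-].
move: hd; rewrite /= in_itv /= => /andP[d0 de].
apply: le_trans _ (HE d d0 _); last by apply: lt_le_trans de _; rewrite ge_min lexx orbT.
apply: lee_wpmul2l; first by rewrite lee_fin ltW.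
apply: ereal_inf_lbound; exists (K * d) => //.
rewrite /= in_itv /= mulr_gt0 //=.
have : d < e / K by apply: lt_le_trans de _; rewrite ge_min lexx.
by rewrite ltr_pdivlMr // mulrC.
Qed.

Theorem mainTheorem3 (R : realType) (a b : R) (g h : R -> R) :
  a < b ->
  {within `[a, b], continuous g} ->
  {within `[a, b], continuous h} ->
  (exists L : R, forall x y, x \in `[a, b] -> y \in `[a, b] ->
      `|h x - h y| <= L * `|x - y|) ->
  packing_dim dist3 (graphC a b g h) = packing_dim dist2 (graph2 a b g) /\
  upper_box_dim dist3 (graphC a b g h) = upper_box_dim dist2 (graph2 a b g) /\
  lower_box_dim dist3 (graphC a b g h) = lower_box_dim dist2 (graph2 a b g).
Proof.
move=> ab _ _ [L1 hL1].
set L := `|L1|.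
have L0 : 0 <= L by exact: normr_ge0.
have hL : forall x y, x \in `[a, b] -> y \in `[a, b] -> `|h x - h y| <= L * `|x - y|.
  move=> x y hx hy; apply: le_trans (hL1 x y hx hy) _.
  by apply: ler_wpM2r; [exact: normr_ge0 | exact: ler_norm].
set K := Num.sqrt (1 + L ^+ 2).
have K1 : 1 <= K by exact: K_ge1.
have K0 : 0 < K by exact: lt_le_trans ltr01 K1.
have aI : a \in `[a, b] by rewrite in_itv /= lexx ltW.
have t2 : graph2 a b g (a, g a) by exists a.
have t3 : graphC a b g h (a, g a, h a) by exists a.
split; first exact: (pdim_eq a b g h L L0 hL).
have hle : forall d, 0 < d -> d < 1 ->
    (box_ratio dist2 (graph2 a b g) d <= box_ratio dist3 (graphC a b g h) d)%E.
  move=> d d0 d1; rewrite !box_ratioE; apply: br_mono => //.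
    exact: (covnum_ge1 _ _ _ _ t2).
  exact: N2_le_N3.
have h0 : forall d, 0 < d -> d < 1 -> (0 <= box_ratio dist3 (graphC a b g h) d)%E.
  move=> d d0 d1; rewrite box_ratioE; apply: br_ge0 => //.
  exact: (covnum_ge1 _ _ _ _ t3).
have hs : forall r, 0 < r -> r < 1 -> exists E, 0 < E /\
    forall d, 0 < d -> d < E -> (r%:E * box_ratio dist3 (graphC a b g h) (K * d)%R
                                  <= box_ratio dist2 (graph2 a b g) d)%E.
  move=> r r0 r1; exists (Num.min 1 (expR (- (ln K / (1 - r))))); split.
    by rewrite lt_min ltr01 expR_gt0.
  move=> d d0; rewrite lt_min => /andP[d1 dE].
  rewrite !box_ratioE; apply: br_scale => //.
  - exact: (covnum_ge1 _ _ _ _ t3).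
  - exact: N3_le_N2.
  have r'0 : 0 < 1 - r by rewrite subr_gt0.
  have : ln d < - (ln K / (1 - r)).
    by rewrite -[X in _ < X]expRK ltr_ln // posrE expR_gt0.
  rewrite ltrNr => hq.
  have -> : ln K = (1 - r) * (ln K / (1 - r)) by field; exact: lt0r_neq0.
  by apply: ler_wpM2l; [exact: ltW | exact: ltW].
split; apply/eqP; rewrite eq_le; apply/andP; split.
- exact: (UB_scale _ _ K K0 h0 hs).
- exact: (UB_le _ _ hle).
- exact: (LB_scale _ _ K K1 h0 hs).
- exact: (LB_le _ _ hle).
Qed.
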